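(* For every connected graph $G$ with at least two vertices, $h_1(G)\le 2\,h_2(G)+1$.
   Context: All graphs are finite, simple, undirected and connected. A configuration of $k$ agents is a $k$-tuple $(v_1,\dots,v_k)$ of pairwise distinct vertices of $G$ whose induced subgraph is connected (for $k=2$: an ordered pair of endpoints of an edge). Two configurations $(v_1,\dots,v_k)$, $(v'_1,\dots,v'_k)$ are adjacent if for every $i$ either $v_i=v'_i$ or $(v_i,v'_i)\in E$. A transition walk of length $l$ is a sequence $\mathcal C_0,\dots,\mathcal C_l$ of configurations with consecutive ones adjacent; it is spanning if every vertex of $G$ lies in some $\mathcal C_t$. $h_k(G)$ is the minimum length of a spanning transition walk with $k$ agents; $h_1(G)$ is thus the minimum length of a walk visiting all vertices. *)

(* Defs.v *)
(* A finite simple graph is a symmetric irreflexive relation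
   e on a finType T. *)
From mathcomp Require Import all_boot.
Set Implicit Arguments. Unset Strict Implicit. Unset Printing Implicit Defensive.

Section Agents.
Variables (T : finType) (e : rel T).

Definition connected_graph : Prop := forall x y : T, connect e x y.

Definition induced_rel (A : pred T) : rel T :=
  fun x y => [&& x \in A, y \in A & e x y].

Definition is_config (k : nat) (c : k.-tuple T) : bool :=
  uniq c &&
  [forall x, forall y,
     ((x \in (c : seq T)) && (y \in (c : seq T))) ==>
       connect (induced_rel (mem (c : seq T))) x y].

Definition config_adj (k : nat) (c c' : k.-tuple T) : bool :=
  [forall i : 'I_k, (tnth c i == tnth c' i) || e (tnth c i) (tnth c' i)].

Definition transition_walk (k l : nat) (s : seq (k.-tuple T)) : Prop :=
  [/\ size s = l.+1, all (@is_config k) s &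
      (if s is c0 :: s' then path (@config_adj k) c0 s' else True)].

Definition spanning (k : nat) (s : seq (k.-tuple T)) : Prop :=
  forall v : T, exists2 c, c \in s & v \in (c : seq T).

Definition has_spanning_walk (k l : nat) : Prop :=
  exists s : seq (k.-tuple T), transition_walk l s /\ spanning s.

(* is_h k n  <->  h_k(G) = n, i.e. n is the minimum length of a spanning
   transition walk with k agents. *)
Definition is_h (k n : nat) : Prop :=
  has_spanning_walk k n /\ forall m, has_spanning_walk k m -> n <= m.

End Agents.

(* Main.v *)
Require Import Defs.
From mathcomp Require Import all_boot.
From Stdlib Require Classical.
Set Implicit Arguments. Unset Strict Implicit. Unset Printing Implicit Defensive.

Section Aux.
Variables (T : finType) (e : rel T).
Hypotheses (esym : symmetric e) (eirr : irreflexive e).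

Definition R (x y : T) := (x == y) || e x y.

Lemma tup2 (c : 2.-tuple T) : exists a b, c = [tuple a; b].
Proof. case: c => [[|a [|b [|]]] //] H; exists a, b; exact: val_inj. Qed.

Definition pos (c : 2.-tuple T) (b : bool) := tnth c (if b then ord0 else ord_max).

Lemma pos2 a b bb : pos [tuple a; b] bb = if bb then a else b.
Proof. by case: bb. Qed.

Lemma cfg2 a b : is_config e [tuple a; b] -> e a b.
Proof.
case/andP=> /= Hu /forallP /(_ a) /forallP /(_ b).
rewrite !inE !eqxx orbT /= => /connectP [p Hp Hl].
move: Hu; rewrite inE andbT => Hab.
case: p Hp Hl => [|z p] /=; first by move=> _ Hl; rewrite Hl eqxx in Hab.
case/andP=> /and3P [_ Hz Hez] _ _.
move: Hz; rewrite !inE => /orP [/eqP Hz|/eqP Hz] //; first by rewrite Hz eirr in Hez.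
by rewrite -Hz.
Qed.

Lemma adj2 a b a' b' : config_adj e [tuple a; b] [tuple a'; b'] -> R a a' /\ R b b'.
Proof.
move/forallP=> H; split; [exact: (H ord0) | exact: (H ord_max)].
Qed.

Lemma W (s : seq (2.-tuple T)) (c0 : 2.-tuple T) :
  all (@is_config _ e 2) (c0 :: s) -> path (@config_adj _ e 2) c0 s -> forall bb,
  exists w, [/\ path R (pos c0 bb) w, size w = (size s).*2.+1 &
    forall c, c \in c0 :: s -> forall v, v \in (c : seq T) -> v \in pos c0 bb :: w].
Proof.
elim: s c0 => [|c1 s IH] c0 /= Hall Hp bb.
- have [a [b E]] := tup2 c0; subst c0.
  move: Hall => /andP [H0 _]; have Hab := cfg2 H0.
  exists [:: pos [tuple a; b] (~~ bb)]; split => //.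
    by rewrite /= !pos2 andbT /R; case: bb; rewrite /= ?(esym b) Hab orbT.
  move=> c; rewrite inE => /eqP -> v; rewrite !pos2 !inE.
  by case: bb => /=; rewrite ?orbF // orbC.
- move: Hall => /andP [Hc0 Hall]; move: Hp => /andP [Hadj Hp].
  have [w [Hw1 Hw2 Hw3]] := IH c1 Hall Hp (~~ bb).
  have [a [b E0]] := tup2 c0; have [a' [b' E1]] := tup2 c1.
  exists [:: pos c0 (~~ bb), pos c1 (~~ bb) & w]; split.
  + rewrite /= Hw1 andbT.
    move: Hc0 Hadj; rewrite E0 E1 !pos2 => /cfg2 Hab /adj2 [H1 H2].
    by case: bb Hw1 Hw3 => /= _ _; rewrite ?H1 ?H2 /R ?(esym b) Hab orbT.
  + by rewrite /= Hw2 doubleS.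
  + move=> c; rewrite inE => /orP [/eqP -> v Hv0|Hc v Hv].
      move: Hv0; rewrite E0 !pos2 !inE => /orP [/eqP ->|/eqP ->];
      by case: bb Hw1 Hw3 => /= _ _; rewrite eqxx ?orbT.
    by move: (Hw3 c Hc v Hv); rewrite !inE => /orP [->|->]; rewrite /= ?orbT.
Qed.

Lemma tup1_cfg (x : T) : is_config e [tuple x].
Proof.
apply/andP; split => //; apply/forallP => y; apply/forallP => z.
by apply/implyP; rewrite !inE => /andP [/eqP -> /eqP ->].
Qed.

Lemma walk1 l : has_spanning_walk e 2 l -> has_spanning_walk e 1 (l.*2.+1).
Proof.
case=> [[|c0 s] [[Hs Hall Hp] Hsp]] //; move: Hs => /= [Hs].
have [w [Hw1 Hw2 Hw3]] := W Hall Hp true.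
exists (map (fun y => [tuple y]) (pos c0 true :: w)); split.
- split.
  + by rewrite /= size_map Hw2 Hs.
  + by apply/allP => c /mapP [y _ ->]; exact: tup1_cfg.
  + rewrite /=; elim: w (pos c0 true) Hw1 {Hw2 Hw3} => //= y w IHw x /andP [Hxy H].
    rewrite IHw // andbT; apply/forallP => i; rewrite (ord1 i); exact: Hxy.
- move=> v; have [c Hc Hv] := Hsp v.
  exists [tuple v]; last by rewrite inE.
  by apply: map_f; exact: Hw3 Hc v Hv.
Qed.

Lemma cover_path (vs : seq T) (x : T) : connected_graph e ->
  exists p, path e x p /\ {subset vs <= x :: p}.
Proof.
move=> Hc; elim: vs x => [|v vs IH] x; first by exists [::].
have /connectP [q Hq Hl] := Hc x v.
have [p' [Hp' Hs]] := IH v.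
exists (q ++ p'); split; first by rewrite cat_path Hq -Hl Hp'.
move=> u; rewrite inE => /orP [/eqP ->|Hu].
  by rewrite -cat_cons mem_cat Hl mem_last.
move: (Hs u Hu); rewrite inE => /orP [/eqP ->|H].
  by rewrite -cat_cons mem_cat Hl mem_last.
by rewrite -cat_cons mem_cat H orbT.
Qed.

Lemma P2 (p : seq T) (x y : T) : path e x (y :: p) ->
  exists c0 s, [/\ pos c0 true = x, pos c0 false = y, path (@config_adj _ e 2) c0 s,
    all (@is_config _ e 2) (c0 :: s) &
    forall v, v \in [:: x, y & p] -> exists2 c, c \in c0 :: s & v \in (c : seq T)].
Proof.
have cfg : forall a b, e a b -> is_config e [tuple a; b].
  move=> a b Hab; apply/andP; split.
    by rewrite /= inE andbT; apply/eqP => E; rewrite E eirr in Hab.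
  apply/forallP => u; apply/forallP => z; apply/implyP.
  have Hi : induced_rel e (mem ([tuple a; b] : seq T)) a b by rewrite /induced_rel !inE !eqxx Hab orbT.
  have Hi' : induced_rel e (mem ([tuple a; b] : seq T)) b a by rewrite /induced_rel !inE !eqxx esym Hab orbT.
  rewrite !inE => /andP [/orP [/eqP ->|/eqP ->] /orP [/eqP ->|/eqP ->]];
    by rewrite ?connect0 ?connect1.
elim: p x y => [|z p IH] x y /=.
- rewrite andbT => Hxy; exists [tuple x; y], [::]; split => //=.
    by rewrite cfg.
  by move=> v Hv; exists [tuple x; y] => //; rewrite inE.
- case/andP=> Hxy Hp.
  have [c1 [s [E1 E2 Hp1 Hall Hcov]]] := IH y z Hp.
  exists [tuple x; y], (c1 :: s); split => //=.
  + rewrite Hp1 andbT; apply/forallP => i.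
    have [a [b Ec]] := tup2 c1; move: E1 E2; rewrite Ec !pos2 => -> ->.
    case: i => [[|[|]]] //= Hi; rewrite /tnth /= ?Hxy ?(path e y (z :: p)) ?orbT //.
    by move: Hp => /= /andP [-> _]; rewrite orbT.
  + by rewrite cfg.
  + move=> v; rewrite inE => /orP [/eqP ->|Hv].
      by exists [tuple x; y]; [exact: mem_head | rewrite inE eqxx].
    by have [c Hc Hvc] := Hcov v Hv; exists c => //; rewrite inE Hc orbT.
Qed.

Lemma min_ex (P : nat -> Prop) : (exists n, P n) ->
  exists n, P n /\ forall m, P m -> n <= m.
Proof.
case=> N; elim: N {-2}N (leqnn N) => [|N IH] n Hn Pn.
  by exists n; split => // m _; move: Hn; rewrite leqn0 => /eqP ->.
case: (Classical_Prop.classic (exists m, m < n /\ P m)) => [[m [Hm Pm]]|H].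
  by apply: (IH m) => //; rewrite -ltnS; apply: leq_trans Hm Hn.
exists n; split => // m Pm; rewrite leqNgt; apply/negP => Hm; apply: H.
by exists m.
Qed.

End Aux.

Theorem mainTheorem8 (T : finType) (e : rel T) :
  symmetric e -> irreflexive e -> connected_graph e -> 1 < #|T| ->
  exists h1 h2 : nat, [/\ is_h e 1 h1, is_h e 2 h2 & h1 <= 2 * h2 + 1].
Proof.
move=> esym eirr Hc HT.
have /card_gt1P [x0 [y [_ _ Hy]]] := HT.
have [p [Hp Hsub]] := cover_path (enum T) x0 Hc.
rewrite eq_sym in Hy.
case: p Hp Hsub => [|y1 p] Hp Hsub.
  by have := Hsub y; rewrite mem_enum => /(_ isT); rewrite inE (negbTE Hy).
have [c0 [s [_ _ Hp2 Hall Hcov]]] := P2 esym eirr Hp.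
have H2ex : exists n, has_spanning_walk e 2 n.
  exists (size s), (c0 :: s); split; first by split.
  by move=> v; apply: Hcov; apply: Hsub; rewrite mem_enum.
have [h2 [H2 H2min]] := min_ex H2ex.
have H1 := walk1 esym eirr H2.
have [h1 [H1' H1min]] := min_ex (ex_intro _ _ H1).
exists h1, h2; split => //.
by rewrite mul2n addn1; exact: H1min _ H1.
Qed.
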